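(* Let $k\ge 1$ and $1\le m\le k$ be integers, and let $-\infty\le\alpha<\beta\le+\infty$. Let $M, G, \widetilde F:(\alpha,\beta)\to\mathbb{R}$ be $C^k$ functions, and let $\mathbb{S}$ denote the set of zeros of $G$ in $(\alpha,\beta)$. Suppose that $$\left(\frac{M(h)}{G(h)}\right)^{(m)}=\frac{\widetilde F(h)}{G^{m+1}(h)}\qquad\text{for all } h\in(\alpha,\beta)\setminus\mathbb{S}.$$ Assume that $\widetilde F$ and $G$ have finitely many zeros in $(\alpha,\beta)$, and that every zero of $M$, $G$ and $\widetilde F$ in $(\alpha,\beta)$ has multiplicity at most $k$. Let $\lambda,\mu,p$ denote the number of zeros of $M$, $\widetilde F$, $G$ in $(\alpha,\beta)$ respectively, counted with multiplicity. Then $$\lambda\le \mu+mp+m.$$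
   Context: A zero $h_0$ of a $C^k$ function $f$ has multiplicity $l$ ($1\le l\le k$) if $f(h_0)=f'(h_0)=\dots=f^{(l-1)}(h_0)=0$ and $f^{(l)}(h_0)\neq 0$. Numbers of zeros ''counted with multiplicity'' are sums of these multiplicities. *)

(* Defs.v *)
From Stdlib Require Import Reals Lra List ClassicalEpsilon.
From Coquelicot Require Import Coquelicot.
Open Scope R_scope.

Definition in_open (a b : Rbar) (x : R) : Prop := Rbar_lt a x /\ Rbar_lt x b.

Definition Ck_on (k : nat) (a b : Rbar) (f : R -> R) : Prop :=
  forall x, in_open a b x ->
    (forall j, (j <= k)%nat -> ex_derive_n f j x) /\
    continuous (Derive_n f k) x.

Definition is_mult (f : R -> R) (x0 : R) (l : nat) : Prop :=
  (1 <= l)%nat /\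
  (forall j, (j < l)%nat -> Derive_n f j x0 = 0) /\
  Derive_n f l x0 <> 0.

(* The multiplicity of the zero x0 of f (meaningful when it exists;
   it is then unique). *)
Definition mult (f : R -> R) (x0 : R) : nat :=
  epsilon (inhabits 0%nat) (fun l => is_mult f x0 l).

Definition sum_mult (f : R -> R) (Z : list R) : nat :=
  fold_right (fun x acc => (mult f x + acc)%nat) 0%nat Z.

(* Main.v *)
Require Import Defs.
From Stdlib Require Import Reals Lra Lia List ClassicalEpsilon FunctionalExtensionality Permutation.
Import ListNotations.
From Coquelicot Require Import Coquelicot.
Import Defs.
Open Scope R_scope.

Lemma ball_R (x e y : R) : ball x e y <-> Rabs (y - x) < e.
Proof. reflexivity. Qed.

Lemma cont_eps (f : R -> R) (x : R) : continuous f x ->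
  forall eps, 0 < eps -> exists d, 0 < d /\ forall y, Rabs (y - x) < d -> Rabs (f y - f x) < eps.
Proof.
  intros H eps He.
  destruct (proj1 (filterlim_locally f (f x)) H (mkposreal eps He)) as [d Hd].
  exists d; split; [apply cond_pos|]. intros y Hy. apply (Hd y). exact Hy.
Qed.

Lemma locally_ball (x : R) (P : R -> Prop) (d : R) : 0 < d ->
  (forall y, Rabs (y - x) < d -> P y) -> locally x P.
Proof. intros Hd H. exists (mkposreal d Hd). intros y Hy. apply H. exact Hy. Qed.

Lemma Derive_n_S (f : R -> R) (n : nat) :
  Derive_n f (S n) = Derive_n (Derive f) n.
Proof.
  induction n; simpl.
  - apply functional_extensionality; intro x. apply Derive_ext. reflexivity.
  - apply functional_extensionality; intro x. simpl in IHn. rewrite IHn. reflexivity.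
Qed.

Lemma open_loc (a b : Rbar) (x : R) : in_open a b x -> locally x (in_open a b).
Proof. intros [H1 H2]. apply (locally_interval _ x a b H1 H2). intros y Hy1 Hy2; split; auto. Qed.

Fixpoint Cn (a b : Rbar) (n : nat) (f : R -> R) : Prop :=
  match n with
  | O => forall x, in_open a b x -> continuous f x
  | S n' => (forall x, in_open a b x -> ex_derive f x) /\ Cn a b n' (Derive f)
  end.

Lemma loc_eq (a b : Rbar) (f g : R -> R) (x : R) :
  (forall y, in_open a b y -> f y = g y) -> in_open a b x -> locally x (fun t => f t = g t).
Proof.
  intros H Hx. generalize (open_loc a b x Hx). apply filter_imp. exact H.
Qed.

Lemma Cn_ext (a b : Rbar) (n : nat) : forall f g : R -> R,
  (forall x, in_open a b x -> f x = g x) -> Cn a b n f -> Cn a b n g.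
Proof.
  induction n as [|n IH]; intros f g Hfg Hf; simpl in *.
  - intros x Hx. apply (continuous_ext_loc g f x).
    + generalize (loc_eq a b f g x Hfg Hx). apply filter_imp. intros; auto.
    + apply Hf, Hx.
  - destruct Hf as [Hd Hf]. split.
    + intros x Hx. apply (ex_derive_ext_loc f g x (loc_eq a b f g x Hfg Hx)), Hd, Hx.
    + apply (IH (Derive f)); auto. intros x Hx. apply Derive_ext_loc, (loc_eq a b f g x Hfg Hx).
Qed.

Lemma Cn_cont (a b : Rbar) (n : nat) (f : R -> R) :
  Cn a b n f -> forall x, in_open a b x -> continuous f x.
Proof.
  destruct n; simpl; intros H x Hx. apply H, Hx.
  apply (@ex_derive_continuous R_AbsRing R_NormedModule f x), (proj1 H), Hx.
Qed.

Lemma Cn_S (a b : Rbar) (n : nat) : forall f, Cn a b (S n) f -> Cn a b n f.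
Proof.
  induction n as [|n IH]; intros f H.
  - simpl. intros x Hx. apply (Cn_cont a b 1 f H x Hx).
  - destruct H as [Hd H]. split; auto.
Qed.

Lemma Cn_le (a b : Rbar) (n n' : nat) (f : R -> R) :
  (n <= n')%nat -> Cn a b n' f -> Cn a b n f.
Proof.
  intros Hle. induction Hle; auto. intros H; apply IHHle, Cn_S, H.
Qed.

Lemma Cn_Derive (a b : Rbar) (n : nat) (f : R -> R) :
  Cn a b (S n) f -> Cn a b n (Derive f).
Proof. intros [_ H]; exact H. Qed.

Lemma Cn_ex_derive (a b : Rbar) (n : nat) (f : R -> R) :
  Cn a b (S n) f -> forall x, in_open a b x -> ex_derive f x.
Proof. intros [H _]; exact H. Qed.

Lemma Cn_const (a b : Rbar) (n : nat) (c : R) : Cn a b n (fun _ => c).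
Proof.
  revert c. induction n as [|n IH]; intros c; simpl.
  - intros; apply continuous_const.
  - split. intros; apply ex_derive_const.
    apply (Cn_ext a b n (fun _ => 0)); [|apply IH].
    intros x _. rewrite Derive_const. reflexivity.
Qed.

Lemma Cn_plus (a b : Rbar) (n : nat) : forall f g,
  Cn a b n f -> Cn a b n g -> Cn a b n (fun x => f x + g x).
Proof.
  induction n as [|n IH]; intros f g Hf Hg; simpl in *.
  - intros x Hx. apply (continuous_plus f g x); auto.
  - destruct Hf as [Hf1 Hf2]; destruct Hg as [Hg1 Hg2]. split.
    + intros x Hx. apply (ex_derive_plus f g x); auto.
    + apply (Cn_ext a b n (fun x => Derive f x + Derive g x)); [|apply IH; auto].
      intros x Hx. rewrite Derive_plus; auto.
Qed.

Lemma Cn_mult (a b : Rbar) (n : nat) : forall f g,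
  Cn a b n f -> Cn a b n g -> Cn a b n (fun x => f x * g x).
Proof.
  induction n as [|n IH]; intros f g Hf Hg.
  - simpl in *. intros x Hx. apply (continuous_mult f g x); auto.
  - generalize (Cn_S _ _ _ _ Hf) (Cn_S _ _ _ _ Hg); intros Hf' Hg'.
    destruct Hf as [Hf1 Hf2]; destruct Hg as [Hg1 Hg2]. split.
    + intros x Hx. apply (ex_derive_mult f g x); auto.
    + apply (Cn_ext a b n (fun x => Derive f x * g x + f x * Derive g x)).
      * intros x Hx. rewrite Derive_mult; auto.
      * apply Cn_plus; apply IH; auto.
Qed.

Lemma Cn_scal (a b : Rbar) (n : nat) (c : R) f :
  Cn a b n f -> Cn a b n (fun x => c * f x).
Proof. intros H. apply (Cn_mult a b n (fun _ => c) f); auto. apply Cn_const. Qed.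

Lemma Cn_minus (a b : Rbar) (n : nat) f g :
  Cn a b n f -> Cn a b n g -> Cn a b n (fun x => f x - g x).
Proof.
  intros Hf Hg. apply (Cn_ext a b n (fun x => f x + (-1) * g x)).
  intros; ring. apply Cn_plus; auto. apply Cn_scal; auto.
Qed.

Lemma Ck_Cn (k : nat) (a b : Rbar) (f : R -> R) : Ck_on k a b f -> Cn a b k f.
Proof.
  intros H.
  assert (A : forall d j, (j + d = k)%nat -> Cn a b d (Derive_n f j)).
  { induction d as [|d IH]; intros j Hj.
    - simpl. intros x Hx. replace j with k by lia. apply (proj2 (H x Hx)).
    - split.
      + intros x Hx. apply ((proj1 (H x Hx)) (S j)). lia.
      + apply (IH (S j)). lia. }
  apply (Cn_ext a b k (Derive_n f 0)); [reflexivity|]. apply A; lia.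
Qed.

Definition Obig (f : R -> R) (g : R) (s : nat) : Prop :=
  exists d, 0 < d /\ exists C, forall x, Rabs (x - g) < d -> Rabs (f x) <= C * Rabs (x - g) ^ s.

Lemma between_abs (g x c : R) : Rmin g x <= c <= Rmax g x -> Rabs (c - g) <= Rabs (x - g).
Proof.
  unfold Rmin, Rmax. destruct (Rle_dec g x); intros [H1 H2];
  unfold Rabs; destruct (Rcase_abs (c - g)); destruct (Rcase_abs (x - g)); lra.
Qed.

Lemma pow_le1 (r : R) (m n : nat) : 0 <= r <= 1 -> (m <= n)%nat -> r ^ n <= r ^ m.
Proof.
  intros Hr Hmn. induction Hmn. lra.
  simpl. apply Rle_trans with (1 * r ^ m0).
  apply Rmult_le_compat_r. apply pow_le; lra. lra. lra.
Qed.

Lemma interval_ball (a b : Rbar) (g : R) : in_open a b g ->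
  exists d, 0 < d /\ forall y, Rabs (y - g) < d -> in_open a b y.
Proof.
  intros [H1 H2]. destruct (Rbar_lt_locally a b g H1 H2) as [d Hd].
  exists d; split. apply cond_pos. intros y Hy; split; apply (Hd y Hy).
Qed.

Lemma deriv_cont_pt (f : R -> R) (x : R) : ex_derive f x -> continuity_pt f x.
Proof.
  intros H. apply continuity_pt_filterlim.
  apply (@ex_derive_continuous R_AbsRing R_NormedModule f x), H.
Qed.

Lemma lemA (a b : Rbar) (g : R) (t : nat) : forall n f, Cn a b n f -> (t <= n)%nat ->
  in_open a b g -> (forall j, (j < t)%nat -> Derive_n f j g = 0) -> Obig f g t.
Proof.
  induction t as [|t IH]; intros n f Hf Htn Hg Hj.
  - destruct (cont_eps f g (Cn_cont a b n f Hf g Hg) 1 Rlt_0_1) as [d [Hd Hd']].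
    exists d; split; auto. exists (Rabs (f g) + 1). intros x Hx.
    specialize (Hd' x Hx). simpl. rewrite Rmult_1_r.
    generalize (Rabs_triang_inv (f x) (f g)). lra.
  - destruct n as [|n]; [lia|].
    assert (HD : Obig (Derive f) g t).
    { apply (IH n); auto. apply Cn_Derive, Hf. lia.
      intros j Hjt. rewrite <- Derive_n_S. apply Hj. lia. }
    destruct HD as [d1 [Hd1 [C1 HC1]]].
    destruct (interval_ball a b g Hg) as [d2 [Hd2 Hd2']].
    exists (Rmin d1 d2); split. apply Rmin_pos; auto.
    exists (Rabs C1). intros x Hx.
    assert (Hx1 : Rabs (x - g) < d1) by (generalize (Rmin_l d1 d2); lra).
    assert (Hx2 : Rabs (x - g) < d2) by (generalize (Rmin_r d1 d2); lra).
    assert (Hin : forall y, Rmin g x <= y <= Rmax g x -> in_open a b y /\ Rabs (y - g) < d1).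
    { intros y Hy. generalize (between_abs g x y Hy). intros; split. apply Hd2'; lra. lra. }
    destruct (MVT_gen f g x (Derive f)) as [c [Hc Hfc]].
    + intros y Hy. apply Derive_correct. apply (Cn_ex_derive a b n f Hf).
      apply Hin; lra.
    + intros y Hy. apply deriv_cont_pt. apply (Cn_ex_derive a b n f Hf). apply Hin; lra.
    + assert (Hf0 : f g = 0) by (apply (Hj 0%nat); lia).
      rewrite Hf0, Rminus_0_r in Hfc. rewrite Hfc, Rabs_mult.
      specialize (HC1 c (proj2 (Hin c Hc))).
      generalize (between_abs g x c Hc); intro Hcx.
      simpl. apply Rle_trans with (Rabs C1 * Rabs (x - g) ^ t * Rabs (x - g)); [|right; ring].
      apply Rmult_le_compat_r. apply Rabs_pos.
      apply Rle_trans with (1 := HC1).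
      apply Rle_trans with (Rabs C1 * Rabs (c - g) ^ t).
      apply Rmult_le_compat_r. apply pow_le, Rabs_pos. apply Rle_abs.
      apply Rmult_le_compat_l. apply Rabs_pos. apply pow_incr. split; auto. apply Rabs_pos.
Qed.

Lemma lemLB (a b : Rbar) (g : R) (q : nat) : forall n f, Cn a b n f -> (q <= n)%nat ->
  in_open a b g -> (forall j, (j < q)%nat -> Derive_n f j g = 0) -> 0 < Derive_n f q g ->
  exists e, 0 < e /\ exists d, 0 < d /\ forall x, g <= x < g + d -> e * (x - g) ^ q <= f x.
Proof.
  induction q as [|q IH]; intros n f Hf Hqn Hg Hj Hpos.
  - simpl in Hpos.
    destruct (cont_eps f g (Cn_cont a b n f Hf g Hg) (f g / 2)) as [d [Hd Hd']]. lra.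
    exists (f g / 2); split. lra. exists d; split; auto. intros x Hx.
    assert (Rabs (x - g) < d) by (rewrite Rabs_right; lra).
    specialize (Hd' x H). simpl. rewrite Rmult_1_r.
    apply Rabs_def2 in Hd'. lra.
  - destruct n as [|n]; [lia|].
    destruct (IH n (Derive f)) as [e1 [He1 [d1 [Hd1 H1]]]].
    apply Cn_Derive, Hf. lia. auto.
    intros j Hjt. rewrite <- Derive_n_S. apply Hj. lia.
    rewrite <- Derive_n_S. exact Hpos.
    destruct (interval_ball a b g Hg) as [d2 [Hd2 Hd2']].
    exists (e1 / INR (S q)); split.
    apply Rdiv_lt_0_compat; auto. apply lt_0_INR; lia.
    exists (Rmin d1 d2); split. apply Rmin_pos; auto.
    intros x Hx.
    assert (Hf0 : f g = 0) by (apply (Hj 0%nat); lia).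
    destruct (Req_dec x g) as [Heq|Hne].
    { subst x. rewrite Rminus_diag_eq, Hf0 by auto. simpl. lra. }
    assert (Hxg : g < x) by lra.
    assert (Hx1 : x < g + d1) by (generalize (Rmin_l d1 d2); lra).
    assert (Hx2 : x < g + d2) by (generalize (Rmin_r d1 d2); lra).
    set (e := e1 / INR (S q)).
    set (h := fun y => f y - e * (y - g) ^ (S q)).
    assert (Hin : forall y, g <= y <= x -> in_open a b y).
    { intros y Hy. apply Hd2'. rewrite Rabs_right; lra. }
    assert (HSq : INR (S q) <> 0) by (apply not_0_INR; lia).
    destruct (MVT_gen h g x (fun y => Derive f y - e * INR (S q) * (y - g) ^ q)) as [c [Hc Hhc]].
    + intros y Hy. rewrite Rmin_left, Rmax_right in Hy by lra.
      unfold h. auto_derive. apply (Cn_ex_derive a b n f Hf). apply Hin; lra.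
      change (Derive (fun x : R => f x) y) with (Derive f y). simpl INR. unfold Rminus. ring.
    + intros y Hy. rewrite Rmin_left, Rmax_right in Hy by lra.
      apply deriv_cont_pt. unfold h. auto_derive. apply (Cn_ex_derive a b n f Hf). apply Hin; lra.
    + rewrite Rmin_left, Rmax_right in Hc by lra.
      unfold h in Hhc. rewrite Hf0 in Hhc. replace (g - g) with 0 in Hhc by ring.
      assert (HH : e1 * (c - g) ^ q <= Derive f c) by (apply H1; lra).
      assert (Hee : e * INR (S q) = e1) by (unfold e; field; auto).
      rewrite Hee in Hhc.
      assert (0 <= (Derive f c - e1 * (c - g) ^ q) * (x - g)).
      { apply Rmult_le_pos; lra. }
      assert (Z : e * 0 ^ S q = 0) by (simpl; ring). rewrite Z in Hhc. lra.
Qed.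

Lemma lemLB_abs (a b : Rbar) (g : R) (q n : nat) (f : R -> R) : Cn a b n f -> (q <= n)%nat ->
  in_open a b g -> (forall j, (j < q)%nat -> Derive_n f j g = 0) -> Derive_n f q g <> 0 ->
  exists e, 0 < e /\ exists d, 0 < d /\ forall x, g <= x < g + d -> e * (x - g) ^ q <= Rabs (f x).
Proof.
  intros Hf Hqn Hg Hj Hne.
  destruct (Rlt_or_le 0 (Derive_n f q g)) as [Hp|Hm].
  - destruct (lemLB a b g q n f Hf Hqn Hg Hj Hp) as [e [He [d [Hd H]]]].
    exists e; split; auto; exists d; split; auto. intros x Hx.
    apply Rle_trans with (f x). apply H, Hx. apply Rle_abs.
  - destruct (lemLB a b g q n (fun x => - f x)) as [e [He [d [Hd H]]]]; auto.
    + apply (Cn_ext a b n (fun x => -1 * f x)). intros; ring. apply Cn_scal, Hf.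
    + intros j Hjq. rewrite Derive_n_opp, Hj; auto. ring.
    + rewrite Derive_n_opp. lra.
    + exists e; split; auto; exists d; split; auto. intros x Hx.
      apply Rle_trans with (- f x). apply H, Hx. rewrite <- Rabs_Ropp. apply Rle_abs.
Qed.

Lemma lemB (a b : Rbar) (g : R) (q n s : nat) (f : R -> R) : Cn a b n f -> (q <= n)%nat ->
  in_open a b g -> (forall j, (j < q)%nat -> Derive_n f j g = 0) -> Derive_n f q g <> 0 ->
  (exists d, 0 < d /\ exists C, forall x, g < x < g + d -> Rabs (f x) <= C * (x - g) ^ s) ->
  (s <= q)%nat.
Proof.
  intros Hf Hqn Hg Hj Hne [d [Hd [C HC]]].
  destruct (lemLB_abs a b g q n f Hf Hqn Hg Hj Hne) as [e [He [d' [Hd' H]]]].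
  destruct (Nat.le_gt_cases s q) as [Hle|Hgt]; auto. exfalso.
  set (eta := Rmin (Rmin d d') (Rmin 1 (e / (Rabs C + 1))) / 2).
  assert (Hc1 : 0 < e / (Rabs C + 1)) by (apply Rdiv_lt_0_compat; generalize (Rabs_pos C); lra).
  assert (Hp : 0 < Rmin (Rmin d d') (Rmin 1 (e / (Rabs C + 1)))) by (repeat apply Rmin_pos; lra).
  assert (Heta : 0 < eta) by (unfold eta; lra).
  assert (Hm1 := Rmin_l (Rmin d d') (Rmin 1 (e / (Rabs C + 1)))).
  assert (Hm2 := Rmin_r (Rmin d d') (Rmin 1 (e / (Rabs C + 1)))).
  assert (Hm3 := Rmin_l d d'). assert (Hm4 := Rmin_r d d').
  assert (Hm5 := Rmin_l 1 (e / (Rabs C + 1))). assert (Hm6 := Rmin_r 1 (e / (Rabs C + 1))).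
  assert (Hetad : eta < d) by (unfold eta; lra).
  assert (Hetad' : eta < d') by (unfold eta; lra).
  assert (Heta1 : eta < 1) by (unfold eta; lra).
  assert (Hetae : eta * (Rabs C + 1) < e).
  { assert (eta < e / (Rabs C + 1)) by (unfold eta; lra).
    apply Rmult_lt_compat_r with (r := Rabs C + 1) in H0. 2: generalize (Rabs_pos C); lra.
    unfold Rdiv in H0. rewrite Rmult_assoc, Rinv_l, Rmult_1_r in H0; auto.
    generalize (Rabs_pos C); lra. }
  specialize (HC (g + eta)). specialize (H (g + eta)).
  replace (g + eta - g) with eta in HC, H by ring.
  assert (A1 := H ltac:(lra)). assert (A2 := HC ltac:(lra)).
  assert (A3 : eta ^ s <= eta ^ (S q)) by (apply pow_le1; lra || lia).
  assert (A4 : 0 < eta ^ q) by (apply pow_lt; lra).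
  assert (A5 : C * eta ^ s <= Rabs C * eta ^ (S q)).
  { apply Rle_trans with (Rabs C * eta ^ s). apply Rmult_le_compat_r. apply pow_le; lra. apply Rle_abs.
    apply Rmult_le_compat_l. apply Rabs_pos. auto. }
  simpl in A5.
  assert (e * eta ^ q <= Rabs C * eta * eta ^ q) by lra.
  assert (e <= Rabs C * eta).
  { apply Rmult_le_reg_r with (eta ^ q); auto. }
  generalize (Rabs_pos C). nra.
Qed.

Lemma Obig_mono (f : R -> R) (g : R) (s s' : nat) : (s' <= s)%nat -> Obig f g s -> Obig f g s'.
Proof.
  intros Hs [d [Hd [C HC]]]. exists (Rmin d 1); split. apply Rmin_pos; lra.
  exists (Rabs C). intros x Hx.
  assert (H1 := Rmin_l d 1). assert (H2 := Rmin_r d 1).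
  apply Rle_trans with (1 := HC x ltac:(lra)).
  apply Rle_trans with (Rabs C * Rabs (x - g) ^ s).
  apply Rmult_le_compat_r. apply pow_le, Rabs_pos. apply Rle_abs.
  apply Rmult_le_compat_l. apply Rabs_pos. apply pow_le1; auto. split. apply Rabs_pos. lra.
Qed.

Lemma Obig_plus (f h : R -> R) (g : R) (s : nat) : Obig f g s -> Obig h g s ->
  Obig (fun x => f x + h x) g s.
Proof.
  intros [d1 [Hd1 [C1 HC1]]] [d2 [Hd2 [C2 HC2]]].
  exists (Rmin d1 d2); split. apply Rmin_pos; lra.
  exists (Rabs C1 + Rabs C2). intros x Hx.
  assert (H1 := Rmin_l d1 d2). assert (H2 := Rmin_r d1 d2).
  specialize (HC1 x ltac:(lra)). specialize (HC2 x ltac:(lra)).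
  assert (P : 0 <= Rabs (x - g) ^ s) by (apply pow_le, Rabs_pos).
  apply Rle_trans with (1 := Rabs_triang (f x) (h x)).
  assert (C1 * Rabs (x - g) ^ s <= Rabs C1 * Rabs (x - g) ^ s)
    by (apply Rmult_le_compat_r; auto; apply Rle_abs).
  assert (C2 * Rabs (x - g) ^ s <= Rabs C2 * Rabs (x - g) ^ s)
    by (apply Rmult_le_compat_r; auto; apply Rle_abs).
  lra.
Qed.

Lemma Obig_mult (f h : R -> R) (g : R) (s t : nat) : Obig f g s -> Obig h g t ->
  Obig (fun x => f x * h x) g (s + t).
Proof.
  intros [d1 [Hd1 [C1 HC1]]] [d2 [Hd2 [C2 HC2]]].
  exists (Rmin d1 d2); split. apply Rmin_pos; lra.
  exists (Rabs C1 * Rabs C2). intros x Hx.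
  assert (H1 := Rmin_l d1 d2). assert (H2 := Rmin_r d1 d2).
  specialize (HC1 x ltac:(lra)). specialize (HC2 x ltac:(lra)).
  assert (P : 0 <= Rabs (x - g) ^ s) by (apply pow_le, Rabs_pos).
  assert (P' : 0 <= Rabs (x - g) ^ t) by (apply pow_le, Rabs_pos).
  rewrite Rabs_mult, pow_add.
  assert (A1 : Rabs (f x) <= Rabs C1 * Rabs (x - g) ^ s).
  { apply Rle_trans with (1 := HC1). apply Rmult_le_compat_r; auto; apply Rle_abs. }
  assert (A2 : Rabs (h x) <= Rabs C2 * Rabs (x - g) ^ t).
  { apply Rle_trans with (1 := HC2). apply Rmult_le_compat_r; auto; apply Rle_abs. }
  apply Rle_trans with ((Rabs C1 * Rabs (x - g) ^ s) * (Rabs C2 * Rabs (x - g) ^ t)).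
  apply Rmult_le_compat; auto; apply Rabs_pos.
  right; ring.
Qed.

Lemma Obig_ext (a b : Rbar) (f h : R -> R) (g : R) (s : nat) : in_open a b g ->
  (forall x, in_open a b x -> f x = h x) -> Obig f g s -> Obig h g s.
Proof.
  intros Hg Hfh [d1 [Hd1 [C1 HC1]]].
  destruct (interval_ball a b g Hg) as [d2 [Hd2 Hd2']].
  exists (Rmin d1 d2); split. apply Rmin_pos; lra. exists C1. intros x Hx.
  assert (H1 := Rmin_l d1 d2). assert (H2 := Rmin_r d1 d2).
  rewrite <- Hfh. apply HC1; lra. apply Hd2'; lra.
Qed.

Fixpoint V (g : R) (n s : nat) (f : R -> R) : Prop :=
  Obig f g s /\ match n with O => True | S n' => V g n' (s - 1) (Derive f) end.

Lemma V_Obig g n s f : V g n s f -> Obig f g s.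
Proof. destruct n; simpl; tauto. Qed.

Lemma V_mono_s (g : R) (n : nat) : forall s s' f, (s' <= s)%nat -> V g n s f -> V g n s' f.
Proof.
  induction n as [|n IH]; intros s s' f Hs [H1 H2]; split.
  - apply (Obig_mono f g s); auto.
  - auto.
  - apply (Obig_mono f g s); auto.
  - apply (IH (s - 1)%nat); auto. lia.
Qed.

Lemma V_S (g : R) (n : nat) : forall s f, V g (S n) s f -> V g n s f.
Proof.
  induction n as [|n IH]; intros s f [H1 H2]; split; auto.
Qed.

Lemma V_le (g : R) (n n' s : nat) (f : R -> R) : (n <= n')%nat -> V g n' s f -> V g n s f.
Proof. intros Hle; induction Hle; auto. intros H; apply IHHle, V_S, H. Qed.

Lemma V_ext (a b : Rbar) (g : R) (n : nat) : in_open a b g -> forall s f h,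
  (forall x, in_open a b x -> f x = h x) -> V g n s f -> V g n s h.
Proof.
  intros Hg. induction n as [|n IH]; intros s f h Hfh [H1 H2]; split.
  - apply (Obig_ext a b f h g s); auto.
  - auto.
  - apply (Obig_ext a b f h g s); auto.
  - apply (IH (s - 1)%nat (Derive f)); auto.
    intros x Hx. apply Derive_ext_loc, (loc_eq a b f h x Hfh Hx).
Qed.

Lemma V_plus (a b : Rbar) (g : R) (n : nat) : in_open a b g -> forall s f h,
  Cn a b n f -> Cn a b n h -> V g n s f -> V g n s h -> V g n s (fun x => f x + h x).
Proof.
  intros Hg. induction n as [|n IH]; intros s f h Hf Hh [F1 F2] [H1 H2]; split.
  - apply Obig_plus; auto.
  - exact I.
  - apply Obig_plus; auto.
  - apply (V_ext a b g n Hg _ (fun x => Derive f x + Derive h x)).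
    + intros x Hx. rewrite Derive_plus; auto. apply (Cn_ex_derive a b n f Hf x Hx).
      apply (Cn_ex_derive a b n h Hh x Hx).
    + apply IH; auto; apply Cn_Derive; auto.
Qed.

Lemma V_mult (a b : Rbar) (g : R) (n : nat) : in_open a b g -> forall s t f h,
  Cn a b n f -> Cn a b n h -> V g n s f -> V g n t h -> V g n (s + t) (fun x => f x * h x).
Proof.
  intros Hg. induction n as [|n IH]; intros s t f h Hf Hh Vf Vh.
  - split; [|exact I]. apply Obig_mult; apply V_Obig with 0%nat; auto.
  - split. apply Obig_mult; apply V_Obig with (S n); auto.
    assert (Hf' := Cn_S a b n f Hf). assert (Hh' := Cn_S a b n h Hh).
    assert (Df := Cn_Derive a b n f Hf). assert (Dh := Cn_Derive a b n h Hh).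
    apply (V_ext a b g n Hg _ (fun x => Derive f x * h x + f x * Derive h x)).
    + intros x Hx. rewrite Derive_mult; auto. apply (Cn_ex_derive a b n f Hf x Hx).
      apply (Cn_ex_derive a b n h Hh x Hx).
    + apply (V_plus a b); auto. apply Cn_mult; auto. apply Cn_mult; auto.
      * apply (V_mono_s g n (s - 1 + t)). lia. apply IH; auto. apply (proj2 Vf).
        apply V_S, Vh.
      * apply (V_mono_s g n (s + (t - 1))). lia. apply IH; auto. apply V_S, Vf.
        apply (proj2 Vh).
Qed.

Lemma V_base (a b : Rbar) (g : R) (n : nat) : in_open a b g -> forall s f,
  Cn a b n f -> (s <= n)%nat -> (forall j, (j < s)%nat -> Derive_n f j g = 0) -> V g n s f.
Proof.
  intros Hg. induction n as [|n IH]; intros s f Hf Hs Hj; split.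
  - apply (lemA a b g s 0 f); auto.
  - exact I.
  - apply (lemA a b g s (S n) f); auto.
  - apply IH. apply Cn_Derive, Hf. lia. intros j Hjs. rewrite <- Derive_n_S. apply Hj. lia.
Qed.

Lemma V_Cn0 (a b : Rbar) (g : R) (n : nat) f : in_open a b g -> Cn a b n f -> V g n 0 f.
Proof. intros Hg Hf. apply (V_base a b g n Hg); auto. lia. intros; lia. Qed.

Lemma V_scal (a b : Rbar) (g : R) (n s : nat) (c : R) f : in_open a b g ->
  Cn a b n f -> V g n s f -> V g n s (fun x => c * f x).
Proof.
  intros Hg Hf Vf. apply (V_mult a b g n Hg 0 s (fun _ => c) f); auto.
  apply Cn_const. apply (V_Cn0 a b); auto. apply Cn_const.
Qed.

Lemma V_to_deriv (a b : Rbar) (g : R) (n s : nat) (f : R -> R) : in_open a b g ->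
  Cn a b n f -> (s <= n)%nat -> Obig f g s -> forall j, (j < s)%nat -> Derive_n f j g = 0.
Proof.
  intros Hg Hf Hs [d [Hd [C HC]]].
  intro j. induction j as [j IHj] using (well_founded_induction Wf_nat.lt_wf). intros Hjs.
  destruct (Req_dec (Derive_n f j g) 0) as [E|E]; auto. exfalso.
  assert (s <= j)%nat; [|lia].
  apply (lemB a b g j n s f Hf); auto. lia.
  intros i Hi. apply IHj; lia.
  exists d; split; auto. exists C. intros x Hx.
  rewrite <- (Rabs_right (x - g)) by lra. apply HC. rewrite Rabs_right; lra.
Qed.

Fixpoint Q (M G : R -> R) (i : nat) : R -> R :=
  match i with
  | O => M
  | S i' => fun x => G x * Derive (Q M G i') x - INR (S i') * (Derive G x * Q M G i' x)
  end.

Lemma Q_Cn (a b : Rbar) (k : nat) (M G : R -> R) : Cn a b k M -> Cn a b k G ->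
  forall i, (i <= k)%nat -> Cn a b (k - i) (Q M G i).
Proof.
  intros HM HG. induction i as [|i IH]; intros Hi.
  - simpl. replace (k - 0)%nat with k by lia. exact HM.
  - assert (Hq := IH ltac:(lia)). replace (k - i)%nat with (S (k - S i)) in Hq by lia.
    destruct k as [|k]; [lia|].
    simpl Q. apply Cn_minus.
    + apply Cn_mult. apply (Cn_le a b _ (S k)). lia. exact HG. apply Cn_Derive, Hq.
    + apply Cn_scal, Cn_mult. apply (Cn_le a b _ k). lia. apply Cn_Derive, HG.
      apply Cn_S, Hq.
Qed.

Lemma Q_V (a b : Rbar) (g : R) (k i e s : nat) (M G : R -> R) : in_open a b g ->
  Cn a b k M -> Cn a b k G -> V g k e G -> (i < k)%nat -> V g (k - i) s (Q M G i) ->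
  V g (k - S i) (s + e - 1) (Q M G (S i)).
Proof.
  intros Hg HM HG VG Hik VQ.
  assert (CQ := Q_Cn a b k M G HM HG i ltac:(lia)).
  set (n := (k - S i)%nat) in *.
  replace (k - i)%nat with (S n) in CQ, VQ by (unfold n; lia).
  destruct k as [|k]; [lia|].
  assert (Hn : (n <= k)%nat) by (unfold n; lia).
  assert (CG : Cn a b n G) by (apply (Cn_le a b _ (S k)); auto).
  assert (CG' : Cn a b n (Derive G)) by (apply (Cn_le a b _ k); auto; apply Cn_Derive, HG).
  assert (VG1 : V g n e G) by (apply (V_le g _ (S k)); auto).
  assert (VG' : V g n (e - 1) (Derive G)) by (apply (V_le g _ k); auto; apply (proj2 VG)).
  assert (CQ' := Cn_Derive a b n _ CQ). assert (CQ0 := Cn_S a b n _ CQ).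
  assert (VQ' := proj2 VQ). assert (VQ0 := V_S g n _ _ VQ).
  simpl Q.
  apply (V_ext a b g n Hg _ (fun x => G x * Derive (Q M G i) x +
     (- INR (S i)) * (Derive G x * Q M G i x))).
  { intros x _; cbv beta. destruct i; simpl; ring. }
  apply (V_plus a b); auto.
  - apply Cn_mult; auto.
  - apply Cn_scal, Cn_mult; auto.
  - apply (V_mono_s g n (e + (s - 1))). lia. apply (V_mult a b); auto.
  - apply (V_scal a b); auto. apply Cn_mult; auto.
    apply (V_mono_s g n (e - 1 + s)). lia. apply (V_mult a b); auto.
Qed.

Lemma fi_derive (M G : R -> R) (i : nat) (x : R) :
  ex_derive (Q M G i) x -> ex_derive G x -> G x <> 0 ->
  is_derive (fun y => Q M G i y / G y ^ (S i)) x (Q M G (S i) x / G x ^ (S (S i))).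
Proof.
  intros HQ HG HG0.
  assert (H := is_derive_div (Q M G i) (fun y => G y ^ (S i)) x _ _
     (Derive_correct _ _ HQ) (is_derive_pow G (S i) x _ (Derive_correct _ _ HG))
     (pow_nonzero _ _ HG0)).
  replace (Q M G (S i) x / G x ^ S (S i)) with
    ((Derive (Q M G i) x * G x ^ S i - Q M G i x * (INR (S i) * Derive G x * G x ^ Init.Nat.pred (S i))) /
       (G x ^ S i) ^ 2); auto.
  change (Q M G (S i) x) with (G x * Derive (Q M G i) x - INR (S i) * (Derive G x * Q M G i x)).
  change (Init.Nat.pred (S i)) with i.
  assert (Gi : G x ^ i <> 0) by (apply pow_nonzero; auto).
  simpl pow. field. split; auto.
Qed.

Lemma G_loc_nz (a b : Rbar) (k : nat) (G : R -> R) (x : R) : Cn a b k G -> in_open a b x ->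
  G x <> 0 -> locally x (fun y => in_open a b y /\ G y <> 0).
Proof.
  intros HG Hx HG0.
  destruct (cont_eps G x (Cn_cont a b k G HG x Hx) (Rabs (G x))) as [d [Hd H]].
  apply Rabs_pos_lt; auto.
  destruct (interval_ball a b x Hx) as [d2 [Hd2 H2]].
  apply (locally_ball x _ (Rmin d d2)). apply Rmin_pos; auto.
  intros y Hy. assert (H1 := Rmin_l d d2). assert (H3 := Rmin_r d d2).
  split. apply H2; lra. specialize (H y ltac:(lra)). intro E. rewrite E in H.
  rewrite Rminus_0_l, Rabs_Ropp in H. lra.
Qed.

Lemma Q_deriv (a b : Rbar) (k : nat) (M G : R -> R) : Cn a b k M -> Cn a b k G ->
  forall i, (i <= k)%nat -> forall x, in_open a b x -> G x <> 0 ->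
  Derive_n (fun y => M y / G y) i x = Q M G i x / G x ^ (S i).
Proof.
  intros HM HG. induction i as [|i IH]; intros Hi x Hx HG0.
  - simpl. field. auto.
  - simpl Derive_n at 1.
    rewrite (Derive_ext_loc _ (fun y => Q M G i y / G y ^ (S i))).
    + apply is_derive_unique, fi_derive; auto.
      * assert (C := Q_Cn a b k M G HM HG i ltac:(lia)).
        replace (k - i)%nat with (S (k - S i)) in C by lia.
        apply (Cn_ex_derive a b _ _ C x Hx).
      * destruct k as [|k]; [lia|]. apply (Cn_ex_derive a b _ _ HG x Hx).
    + generalize (G_loc_nz a b k G x HG Hx HG0). apply filter_imp.
      intros y [Hy1 Hy2]. apply IH; auto. lia.
Qed.

Lemma Q_rolle (a b : Rbar) (k i : nat) (M G : R -> R) (z z2 : R) :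
  Cn a b k M -> Cn a b k G -> (i < k)%nat -> z < z2 ->
  (forall y, z <= y <= z2 -> in_open a b y /\ G y <> 0) ->
  Q M G i z = 0 -> Q M G i z2 = 0 -> exists w, z < w < z2 /\ Q M G (S i) w = 0.
Proof.
  intros HM HG Hik Hzz Hin Hz Hz2.
  assert (C := Q_Cn a b k M G HM HG i ltac:(lia)).
  replace (k - i)%nat with (S (k - S i)) in C by lia.
  destruct k as [|k']; [lia|].
  set (f := fun y => Q M G i y / G y ^ (S i)).
  assert (Hd : forall y, z <= y <= z2 -> is_derive f y (Q M G (S i) y / G y ^ (S (S i)))).
  { intros y Hy. destruct (Hin y Hy) as [Hy1 Hy2]. apply fi_derive; auto.
    apply (Cn_ex_derive a b _ _ C y Hy1). apply (Cn_ex_derive a b _ _ HG y Hy1). }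
  assert (pr : forall y, z < y < z2 -> derivable_pt f y).
  { intros y Hy. apply ex_derive_Reals_0. eexists. apply Hd. lra. }
  destruct (Rolle f z z2 pr) as [c [Pc Hc]].
  - intros y Hy. apply deriv_cont_pt. eexists. apply Hd; auto.
  - auto.
  - unfold f. rewrite Hz, Hz2. unfold Rdiv. ring.
  - exists c; split; auto. rewrite Derive_Reals in Hc.
    rewrite (is_derive_unique f c _ (Hd c ltac:(lra))) in Hc.
    destruct (Hin c ltac:(lra)) as [_ Gc].
    assert (Gp : G c ^ S (S i) <> 0) by (apply pow_nonzero; auto).
    apply (Rmult_eq_compat_r (G c ^ S (S i))) in Hc. unfold Rdiv in Hc.
    rewrite Rmult_assoc, Rinv_l, Rmult_1_r, Rmult_0_l in Hc; auto.
Qed.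

Definition sumL (f : R -> nat) (l : list R) : nat :=
  fold_right (fun x acc => (f x + acc)%nat) 0%nat l.

Definition bP (P : R -> Prop) (x : R) : bool :=
  if excluded_middle_informative (P x) then true else false.

Definition sumP (P : R -> Prop) (f : R -> nat) (l : list R) : nat := sumL f (filter (bP P) l).

Lemma bP_true (P : R -> Prop) x : bP P x = true <-> P x.
Proof. unfold bP. destruct (excluded_middle_informative (P x)); split; intros; auto; discriminate || contradiction. Qed.

Lemma sumP_cons (P : R -> Prop) f x l :
  sumP P f (x :: l) = ((if excluded_middle_informative (P x) then f x else 0) + sumP P f l)%nat.
Proof.
  unfold sumP. simpl. unfold bP at 1. destruct (excluded_middle_informative (P x)); simpl; auto.
Qed.

Lemma sumP_split (P P1 P2 P3 : R -> Prop) f l :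
  (forall x, P x <-> P1 x \/ P2 x \/ P3 x) ->
  (forall x, P1 x -> P2 x -> False) -> (forall x, P1 x -> P3 x -> False) ->
  (forall x, P2 x -> P3 x -> False) ->
  sumP P f l = (sumP P1 f l + sumP P2 f l + sumP P3 f l)%nat.
Proof.
  intros H H12 H13 H23. induction l as [|x l IH]. reflexivity.
  rewrite !sumP_cons, IH.
  destruct (excluded_middle_informative (P x)); destruct (excluded_middle_informative (P1 x));
  destruct (excluded_middle_informative (P2 x)); destruct (excluded_middle_informative (P3 x));
  try lia; exfalso; firstorder.
Qed.

Lemma sumP_notin (g : R) f l : ~ In g l -> sumP (fun x => x = g) f l = 0%nat.
Proof.
  induction l as [|x l IH]; intros Hin. reflexivity.
  rewrite sumP_cons. destruct (excluded_middle_informative (x = g)).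
  exfalso; apply Hin; left; auto. rewrite IH; auto. intro; apply Hin; right; auto.
Qed.

Lemma sumP_point (g : R) f l : NoDup l -> In g l -> sumP (fun x => x = g) f l = f g.
Proof.
  induction l as [|x l IH]; intros Hnd Hin. destruct Hin.
  inversion Hnd; subst. rewrite sumP_cons.
  destruct (excluded_middle_informative (x = g)) as [E|E].
  - subst. rewrite sumP_notin; auto; lia.
  - destruct Hin as [E'|Hin]. exfalso; apply E; exact E'. rewrite IH; auto.
Qed.

Lemma sumP_all (P : R -> Prop) f l : (forall x, In x l -> P x) -> sumP P f l = sumL f l.
Proof.
  induction l as [|x l IH]; intros H. reflexivity.
  rewrite sumP_cons. destruct (excluded_middle_informative (P x)).
  simpl. rewrite IH; auto. intros; apply H; right; auto.
  exfalso; apply n, H; left; auto.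
Qed.

Lemma sumP_pos (P : R -> Prop) l : (0 < sumP P (fun _ => 1%nat) l)%nat -> exists x, In x l /\ P x.
Proof.
  induction l as [|x l IH]; intros H. simpl in H. unfold sumP in H; simpl in H; lia.
  rewrite sumP_cons in H. destruct (excluded_middle_informative (P x)).
  exists x; split; auto; left; auto.
  destruct (IH H) as [y [Hy1 Hy2]]. exists y; split; auto; right; auto.
Qed.

Lemma sumP_zero (P : R -> Prop) l x : sumP P (fun _ => 1%nat) l = 0%nat -> In x l -> P x -> False.
Proof.
  induction l as [|y l IH]; intros H Hin Hx. destruct Hin.
  rewrite sumP_cons in H. destruct (excluded_middle_informative (P y)). lia.
  destruct Hin as [E|Hin]. subst; contradiction. apply IH; auto.
Qed.

Lemma sumL_perm f l l' : Permutation l l' -> sumL f l = sumL f l'.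
Proof. induction 1; simpl; lia. Qed.

Lemma sumL_le (f h : R -> nat) l : (forall x, In x l -> (f x <= h x)%nat) -> (sumL f l <= sumL h l)%nat.
Proof.
  induction l as [|x l IH]; intros H; simpl. lia.
  assert (f x <= h x)%nat by (apply H; left; auto).
  assert (sumL f l <= sumL h l)%nat by (apply IH; intros; apply H; right; auto). lia.
Qed.

Lemma filter_neq_id (x : R) l : ~ In x l ->
  filter (fun y => if Req_EM_T y x then false else true) l = l.
Proof.
  induction l as [|z l IH]; intros H; auto. simpl. destruct (Req_EM_T z x).
  subst; exfalso; apply H; left; auto. rewrite IH; auto. intro; apply H; right; auto.
Qed.

Lemma sumL_pick f l x : NoDup l -> In x l ->
  sumL f l = (f x + sumL f (filter (fun y => if Req_EM_T y x then false else true) l))%nat.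
Proof.
  induction l as [|y l IH]; intros Hnd Hin. destruct Hin.
  inversion Hnd; subst. simpl. destruct (Req_EM_T y x) as [E|E].
  - subst. rewrite filter_neq_id; auto.
  - destruct Hin as [E'|Hin]. exfalso; exact (E E'). simpl. rewrite (IH H2 Hin). lia.
Qed.

Definition weight (L : list (R * nat)) : nat := fold_right (fun p acc => (snd p + acc)%nat) 0%nat L.

Fixpoint srt (L : list (R * nat)) : Prop :=
  match L with
  | nil => True
  | p :: L' => List.Forall (fun q : R * nat => Rlt (fst p) (fst q)) L' /\ srt L'
  end.

Lemma count_le (f : R -> nat) : forall L Y, srt L -> NoDup Y ->
  List.Forall (fun p => In (fst p) Y /\ (snd p <= f (fst p))%nat) L -> (weight L <= sumL f Y)%nat.
Proof.
  induction L as [|p L IH]; intros Y HL HY HF. simpl; lia.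
  destruct HL as [Hp HL]. inversion HF; subst. destruct H1 as [Hin Hle].
  rewrite (sumL_pick f Y (fst p) HY Hin). simpl.
  assert (weight L <= sumL f (filter (fun y => if Req_EM_T y (fst p) then false else true) Y))%nat; [|lia].
  apply IH; auto. apply NoDup_filter, HY.
  rewrite Forall_forall in *. intros q Hq. destruct (H2 q Hq) as [Hq1 Hq2]. split; auto.
  apply filter_In. split; auto. destruct (Req_EM_T (fst q) (fst p)); auto.
  specialize (Hp q Hq). lra.
Qed.

Fixpoint ins (x : R) (l : list R) : list R :=
  match l with
  | nil => x :: nil
  | y :: l' => if Rlt_dec x y then x :: l else y :: ins x l'
  end.

Fixpoint isort (l : list R) : list R :=
  match l with nil => [] | x :: l' => ins x (isort l') end.

Fixpoint srtR (l : list R) : Prop :=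
  match l with nil => True | x :: l' => List.Forall (Rlt x) l' /\ srtR l' end.

Lemma ins_perm x l : Permutation (ins x l) (x :: l).
Proof.
  induction l as [|y l IH]; simpl; auto. destruct (Rlt_dec x y); auto.
  eapply perm_trans. apply perm_skip, IH. apply perm_swap.
Qed.

Lemma isort_perm l : Permutation (isort l) l.
Proof.
  induction l as [|x l IH]; simpl; auto. eapply perm_trans. apply ins_perm. apply perm_skip, IH.
Qed.

Lemma ins_srt x : forall l, srtR l -> ~ In x l -> srtR (ins x l).
Proof.
  induction l as [|y l IH]; intros Hs Hin; simpl. split; auto.
  destruct Hs as [Hy Hs]. destruct (Rlt_dec x y).
  - simpl. split; [|split; auto]. constructor; auto. rewrite Forall_forall in *.
    intros z Hz. specialize (Hy z Hz). lra.
  - simpl. split. rewrite Forall_forall in *. intros z Hz.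
    apply (Permutation_in _ (ins_perm x l)) in Hz. destruct Hz as [E|Hz].
    subst. assert (z <> y) by (intro; apply Hin; left; auto). lra. apply Hy, Hz.
    apply IH; auto. intro; apply Hin; right; auto.
Qed.

Lemma isort_srt l : NoDup l -> srtR (isort l).
Proof.
  induction l as [|x l IH]; intros Hnd; simpl; auto. inversion Hnd; subst.
  apply ins_srt; auto. intro Hin. apply H1. apply (Permutation_in _ (isort_perm l)), Hin.
Qed.

Lemma srt_map (h : R -> nat) l : srtR l -> srt (map (fun z => (z, h z)) l).
Proof.
  induction l as [|x l IH]; simpl; auto. intros [H1 H2]. split; auto.
  rewrite Forall_forall in *. intros q Hq. apply in_map_iff in Hq. destruct Hq as [z [E Hz]].
  subst. simpl. apply H1, Hz.
Qed.

Lemma weight_map (h : R -> nat) l : weight (map (fun z => (z, h z)) l) = sumL h l.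
Proof. induction l; simpl; auto. Qed.

Lemma in_open_between (a b : Rbar) (z z2 y : R) : in_open a b z -> in_open a b z2 ->
  z <= y <= z2 -> in_open a b y.
Proof.
  unfold in_open. destruct a, b; simpl; intros; lra.
Qed.

Lemma mult_eq (f : R -> R) (x : R) (l : nat) : is_mult f x l -> mult f x = l.
Proof.
  intros H. unfold mult.
  assert (H2 := epsilon_spec (inhabits 0%nat) (fun l => is_mult f x l) (ex_intro _ l H)).
  set (l2 := epsilon _ _) in *.
  destruct H as [_ [H1 H3]]. destruct H2 as [_ [H4 H5]].
  destruct (Nat.lt_total l2 l) as [Hl|[Hl|Hl]]; auto.
  exfalso; apply H5, H1, Hl. exfalso; apply H3, H4, Hl.
Qed.

Definition valid (a b : Rbar) (k : nat) (M G : R -> R) (i : nat) (p : R * nat) : Prop :=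
  in_open a b (fst p) /\ (1 <= snd p)%nat /\ (snd p = 1%nat \/ (snd p <= k - i)%nat) /\
  forall j, (j < snd p)%nat -> Derive_n (Q M G i) j (fst p) = 0.

Lemma descent (al be : Rbar) (k : nat) (M G : R -> R) (i : nat) (z : R) (t : nat) :
  Cn al be k M -> Cn al be k G -> (i < k)%nat -> in_open al be z -> (2 <= t)%nat ->
  (t <= k - i)%nat -> (forall j, (j < t)%nat -> Derive_n (Q M G i) j z = 0) ->
  forall j, (j < t - 1)%nat -> Derive_n (Q M G (S i)) j z = 0.
Proof.
  intros HM HG Hik Hz Ht Htk Hj.
  assert (CQ := Q_Cn al be k M G HM HG i ltac:(lia)).
  assert (VQ := V_base al be z (k - i) Hz t (Q M G i) CQ Htk Hj).
  assert (VG := V_Cn0 al be z k G Hz HG).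
  assert (V1 := Q_V al be z k i 0 t M G Hz HM HG VG Hik VQ).
  replace (t + 0 - 1)%nat with (t - 1)%nat in V1 by lia.
  apply (V_to_deriv al be z (k - S i) (t - 1) (Q M G (S i)) Hz).
  - apply (Q_Cn al be k M G HM HG (S i)); lia.
  - lia.
  - apply (V_Obig z (k - S i)), V1.
Qed.

Lemma rolle_step (al be a b : Rbar) (k : nat) (M G : R -> R) (i : nat) :
  Cn al be k M -> Cn al be k G -> (i < k)%nat ->
  (forall x, in_open a b x -> in_open al be x /\ G x <> 0) ->
  forall L, srt L -> List.Forall (valid a b k M G i) L ->
  exists L', srt L' /\ List.Forall (valid a b k M G (S i)) L' /\ (weight L <= weight L' + 1)%nat /\
    (forall lo, List.Forall (fun p : R * nat => lo <= fst p) L -> List.Forall (fun p : R * nat => lo <= fst p) L').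
Proof.
  intros HM HG Hik HJ.
  induction L as [|[z t] L IH]; intros Hs HF.
  { exists nil. repeat split; simpl; auto. }
  destruct Hs as [Hp Hs]. inversion HF as [|? ? Hv HF']; subst.
  destruct Hv as [Hz [Ht1 [Ht2 Hder]]]. simpl fst in *; simpl snd in *.
  assert (Kz : (2 <= t)%nat -> valid a b k M G (S i) (z, (t - 1)%nat)).
  { intros Ht. split; [exact Hz|]. simpl. split. lia. split. lia.
    apply (descent al be k M G i z t); auto. apply HJ, Hz. lia. }
  assert (Qz : Q M G i z = 0) by (apply (Hder 0%nat); lia).
  destruct L as [|[z2 t2] L2].
  - destruct (Compare_dec.le_lt_dec 2 t) as [Ht|Ht].
    + exists ((z, (t - 1)%nat) :: nil). simpl. repeat split; auto. lia.
      intros lo Hlo. inversion Hlo; subst. constructor; auto.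
    + exists nil. simpl. repeat split; auto. lia.
  - destruct (IH Hs HF') as [L1 [HL1s [HL1v [HL1w HL1lo]]]].
    assert (Hzz : z < z2) by (inversion Hp; auto).
    inversion HF' as [|? ? Hv2 _]; subst. destruct Hv2 as [Hz2 [Ht21 [_ Hder2]]].
    simpl fst in *; simpl snd in *.
    assert (Qz2 : Q M G i z2 = 0) by (apply (Hder2 0%nat); lia).
    destruct (Q_rolle al be k i M G z z2 HM HG Hik Hzz) as [w [Hw Qw]]; auto.
    { intros y Hy. apply HJ. apply (in_open_between a b z z2 y); auto. }
    assert (Hge : List.Forall (fun p : R * nat => z2 <= fst p) L1).
    { apply HL1lo. constructor. simpl; lra. destruct Hs as [Hs1 _].
      rewrite Forall_forall in *. intros q Hq. specialize (Hs1 q Hq). simpl in Hs1. lra. }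
    assert (Vw : valid a b k M G (S i) (w, 1%nat)).
    { split. simpl. apply (in_open_between a b z z2 w); auto; lra.
      simpl. split. lia. split. auto. intros j Hj. assert (j = 0%nat) by lia. subst. exact Qw. }
    assert (Sw : srt ((w, 1%nat) :: L1)).
    { simpl. split; auto. rewrite Forall_forall in *. intros q Hq. specialize (Hge q Hq). lra. }
    assert (Fz : List.Forall (fun q : R * nat => z < fst q) ((w, 1%nat) :: L1)).
    { constructor. simpl; lra. rewrite Forall_forall in *. intros q Hq. specialize (Hge q Hq). lra. }
    assert (Lo : forall lo, lo <= z -> List.Forall (fun p : R * nat => lo <= fst p) ((w, 1%nat) :: L1)).
    { intros lo Hlo. constructor. simpl; lra. rewrite Forall_forall in *. intros q Hq.
      specialize (Hge q Hq). lra. }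
    destruct (Compare_dec.le_lt_dec 2 t) as [Ht|Ht].
    + exists ((z, (t - 1)%nat) :: (w, 1%nat) :: L1). split; [|split; [|split]].
      * simpl. split; [exact Fz|]. exact Sw.
      * constructor; auto.
      * simpl in *. lia.
      * intros lo Hlo. inversion Hlo; subst. simpl in H1. constructor. simpl; lra. apply Lo; lra.
    + exists ((w, 1%nat) :: L1). split; [|split; [|split]].
      * exact Sw.
      * constructor; auto.
      * simpl in *. lia.
      * intros lo Hlo. inversion Hlo; subst. simpl in H1. apply Lo; lra.
Qed.

Lemma chain (al be a b : Rbar) (k m : nat) (M G : R -> R) :
  Cn al be k M -> Cn al be k G -> (m <= k)%nat ->
  (forall x, in_open a b x -> in_open al be x /\ G x <> 0) ->
  forall L0, srt L0 -> List.Forall (valid a b k M G 0) L0 ->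
  forall i, (i <= m)%nat -> exists L, srt L /\ List.Forall (valid a b k M G i) L /\
    (weight L0 <= weight L + i)%nat.
Proof.
  intros HM HG Hmk HJ L0 Hs0 Hv0. induction i as [|i IH]; intros Hi.
  - exists L0. repeat split; auto. lia.
  - destruct (IH ltac:(lia)) as [L [Hs [Hv Hw]]].
    destruct (rolle_step al be a b k M G i HM HG ltac:(lia) HJ L Hs Hv) as [L' [Hs' [Hv' [Hw' _]]]].
    exists L'. repeat split; auto. lia.
Qed.

Lemma interval_case (al be a b : Rbar) (k m : nat) (M G Ft : R -> R) (ZF ZM : list R) :
  Cn al be k M -> Cn al be k G -> (m <= k)%nat ->
  (forall h, in_open al be h -> G h <> 0 -> Ft h = Q M G m h) ->
  NoDup ZF -> (forall x, In x ZF <-> (in_open al be x /\ Ft x = 0)) ->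
  NoDup ZM -> (forall x, In x ZM -> in_open al be x /\ M x = 0) ->
  (forall x, in_open al be x -> M x = 0 -> exists l, (l <= k)%nat /\ is_mult M x l) ->
  (forall x, in_open al be x -> Ft x = 0 -> exists l, (l <= k)%nat /\ is_mult Ft x l) ->
  (forall x, in_open a b x -> in_open al be x /\ G x <> 0) ->
  (sumP (in_open a b) (mult M) ZM <= sumP (in_open a b) (mult Ft) ZF + m)%nat.
Proof.
  intros HM HG Hmk HQ HZF HZFs HZM HZMs HmM HmF HJ.
  set (Zs := isort (filter (bP (in_open a b)) ZM)).
  set (L0 := map (fun z => (z, mult M z)) Zs).
  assert (HL0s : srt L0) by (apply srt_map, isort_srt, NoDup_filter, HZM).
  assert (HL0v : List.Forall (valid a b k M G 0) L0).
  { apply Forall_forall. intros p Hp. unfold L0 in Hp. apply in_map_iff in Hp.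
    destruct Hp as [z [E Hz]]. subst p.
    apply (Permutation_in _ (isort_perm _)) in Hz. apply filter_In in Hz.
    destruct Hz as [Hz1 Hz2]. apply bP_true in Hz2.
    destruct (HZMs z Hz1) as [Hz3 Hz4]. destruct (HmM z Hz3 Hz4) as [l [Hl Hml]].
    rewrite (mult_eq _ _ _ Hml). destruct Hml as [Hl1 [Hl2 _]].
    split; [exact Hz2|]. simpl. split; auto. split. right; lia. exact Hl2. }
  destruct (chain al be a b k m M G HM HG Hmk HJ L0 HL0s HL0v m (le_n m)) as [L [Hs [Hv Hw]]].
  assert (W0 : weight L0 = sumP (in_open a b) (mult M) ZM).
  { unfold L0. rewrite weight_map. unfold sumP. apply sumL_perm, isort_perm. }
  assert (W1 : (weight L <= sumP (in_open a b) (mult Ft) ZF)%nat).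
  { apply count_le; auto. apply NoDup_filter, HZF.
    rewrite Forall_forall in *. intros [z t] Hp. specialize (Hv _ Hp).
    destruct Hv as [Hz [Ht1 [_ Hder]]]. simpl in *.
    assert (Heq : forall j, Derive_n Ft j z = Derive_n (Q M G m) j z).
    { intros j. apply Derive_n_ext_loc. generalize (open_loc a b z Hz). apply filter_imp.
      intros y Hy. destruct (HJ y Hy). apply HQ; auto. }
    assert (Fz : Ft z = 0) by (rewrite <- (Hder 0%nat) by lia; apply (Heq 0%nat)).
    destruct (HJ z Hz) as [Hz' _].
    destruct (HmF z Hz' Fz) as [q [Hq Hmq]]. rewrite (mult_eq _ _ _ Hmq).
    split. apply filter_In. split. apply HZFs; auto. apply bP_true; auto.
    destruct Hmq as [_ [_ Hq3]]. destruct (Nat.lt_ge_cases q t) as [Hlt|Hge]; auto.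
    exfalso. apply Hq3. rewrite Heq. apply Hder, Hlt. }
  lia.
Qed.

Lemma local_case (al be : Rbar) (k m : nat) (M G Ft : R -> R) (g : R) :
  Cn al be k M -> Cn al be k G -> Cn al be k Ft -> (m <= k)%nat ->
  (forall h, in_open al be h -> G h <> 0 -> Ft h = Q M G m h) ->
  in_open al be g -> G g = 0 -> M g = 0 ->
  (forall x, in_open al be x -> M x = 0 -> exists l, (l <= k)%nat /\ is_mult M x l) ->
  (forall x, in_open al be x -> G x = 0 -> exists l, (l <= k)%nat /\ is_mult G x l) ->
  (forall x, in_open al be x -> Ft x = 0 -> exists l, (l <= k)%nat /\ is_mult Ft x l) ->
  Ft g = 0 /\ (mult M g <= mult Ft g)%nat.
Proof.
  intros HM HG HF Hmk HQ Hg HGg HMg HmM HmG HmF.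
  destruct (HmM g Hg HMg) as [s [Hs HMs]].
  destruct (HmG g Hg HGg) as [r [Hr HGr]].
  rewrite (mult_eq _ _ _ HMs).
  assert (Hs1 : (1 <= s)%nat) by apply HMs.
  assert (VG : V g k 1 G).
  { apply (V_base al be g k Hg); auto. destruct HGr as [Hr1 _]. lia.
    intros j Hj. assert (j = 0%nat) by lia. subst. exact HGg. }
  assert (VM : V g k s M) by (apply (V_base al be g k Hg); auto; apply HMs).
  assert (VQ : forall i, (i <= m)%nat -> V g (k - i) s (Q M G i)).
  { induction i as [|i IH]; intros Hi.
    - replace (k - 0)%nat with k by lia. exact VM.
    - assert (H := Q_V al be g k i 1 s M G Hg HM HG VG ltac:(lia) (IH ltac:(lia))).
      replace (s + 1 - 1)%nat with s in H by lia. exact H. }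
  destruct (V_Obig _ _ _ _ (VQ m (le_n m))) as [d1 [Hd1 [C HC]]].
  destruct (lemLB_abs al be g r k G HG Hr Hg ltac:(apply HGr) ltac:(apply HGr))
    as [e [He [d2 [Hd2 HLB]]]].
  destruct (interval_ball al be g Hg) as [d3 [Hd3 Hd3']].
  set (d := Rmin d1 (Rmin d2 d3)).
  assert (Hm1 := Rmin_l d1 (Rmin d2 d3)). assert (Hm2 := Rmin_r d1 (Rmin d2 d3)).
  assert (Hm3 := Rmin_l d2 d3). assert (Hm4 := Rmin_r d2 d3).
  assert (Hd : 0 < d) by (unfold d; repeat apply Rmin_pos; auto).
  assert (Bound : exists d0, 0 < d0 /\ exists C0, forall x, g < x < g + d0 ->
     Rabs (Ft x) <= C0 * (x - g) ^ s).
  { exists d; split; auto. exists C. intros x Hx.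
    assert (Hxin : in_open al be x) by (apply Hd3'; rewrite Rabs_right; unfold d in *; lra).
    assert (HGx : G x <> 0).
    { intro E. assert (P : 0 < e * (x - g) ^ r) by (apply Rmult_lt_0_compat; auto; apply pow_lt; lra).
      specialize (HLB x ltac:(unfold d in *; lra)). rewrite E, Rabs_R0 in HLB. lra. }
    rewrite HQ; auto. rewrite <- (Rabs_right (x - g)) by lra. apply HC.
    rewrite Rabs_right; unfold d in *; lra. }
  assert (HFg : Ft g = 0).
  { destruct (Req_dec (Ft g) 0) as [E|E]; auto. exfalso.
    assert (s <= 0)%nat; [|lia].
    apply (lemB al be g 0 k s Ft HF); auto. lia. intros; lia. }
  split; auto.
  destruct (HmF g Hg HFg) as [q [Hq HFq]]. rewrite (mult_eq _ _ _ HFq).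
  apply (lemB al be g q k s Ft HF); auto; apply HFq.
Qed.

Lemma split_iff (a b : Rbar) (g x : R) : in_open a b g ->
  (in_open a b x <-> in_open a (Finite g) x \/ x = g \/ in_open (Finite g) b x).
Proof.
  unfold in_open. intros Hg. destruct (Rtotal_order x g) as [H|[H|H]]; destruct a, b; simpl in *;
  split; intros; try tauto; try (left; lra); try (right; left; lra); try (right; right; lra);
  intuition lra.
Qed.

Lemma main_ind (al be : Rbar) (k m : nat) (M G Ft : R -> R) (ZF ZG ZM : list R) :
  Cn al be k M -> Cn al be k G -> Cn al be k Ft -> (m <= k)%nat ->
  (forall h, in_open al be h -> G h <> 0 -> Ft h = Q M G m h) ->
  NoDup ZF -> (forall x, In x ZF <-> (in_open al be x /\ Ft x = 0)) ->
  NoDup ZG -> (forall x, In x ZG <-> (in_open al be x /\ G x = 0)) ->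
  NoDup ZM -> (forall x, In x ZM -> in_open al be x /\ M x = 0) ->
  (forall x, in_open al be x -> M x = 0 -> exists l, (l <= k)%nat /\ is_mult M x l) ->
  (forall x, in_open al be x -> G x = 0 -> exists l, (l <= k)%nat /\ is_mult G x l) ->
  (forall x, in_open al be x -> Ft x = 0 -> exists l, (l <= k)%nat /\ is_mult Ft x l) ->
  forall n a b, (forall x, in_open a b x -> in_open al be x) ->
  (sumP (in_open a b) (fun _ => 1%nat) ZG <= n)%nat ->
  (sumP (in_open a b) (mult M) ZM <=
     sumP (in_open a b) (mult Ft) ZF + m * sumP (in_open a b) (fun _ => 1%nat) ZG + m)%nat.
Proof.
  intros HM HG HF Hmk HQ HZF HZFs HZG HZGs HZM HZMs HmM HmG HmF.
  induction n as [|n IH]; intros a b Hsub Hcnt.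
  all: destruct (Nat.eq_dec (sumP (in_open a b) (fun _ => 1%nat) ZG) 0) as [E|E].
  1,3: rewrite E; rewrite Nat.mul_0_r, Nat.add_0_r;
      apply (interval_case al be a b k m M G Ft ZF ZM); auto;
      intros x Hx; split; auto; intro Gx;
      apply (sumP_zero (in_open a b) ZG x E); auto; apply HZGs; auto.
  lia.
  destruct (sumP_pos (in_open a b) ZG ltac:(lia)) as [g [HgZ Hgab]].
  destruct (proj1 (HZGs g) HgZ) as [Hg HGg].
  assert (Sp : forall f l, sumP (in_open a b) f l = (sumP (in_open a (Finite g)) f l +
      sumP (fun x => x = g) f l + sumP (in_open (Finite g) b) f l)%nat).
  { intros f l. apply sumP_split.
    - intros x. apply split_iff, Hgab.
    - unfold in_open; intros x [_ H1] H2; simpl in *; lra.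
    - unfold in_open; intros x [_ H1] [H2 _]; simpl in *; lra.
    - unfold in_open; intros x H1 [H2 _]; simpl in *; lra. }
  assert (Hsub1 : forall x, in_open a (Finite g) x -> in_open al be x).
  { intros x Hx. apply Hsub. apply (split_iff a b g x Hgab). auto. }
  assert (Hsub2 : forall x, in_open (Finite g) b x -> in_open al be x).
  { intros x Hx. apply Hsub. apply (split_iff a b g x Hgab). auto. }
  assert (Cg := Sp (fun _ => 1%nat) ZG). rewrite (sumP_point g _ ZG HZG HgZ) in Cg.
  assert (IH1 := IH a (Finite g) Hsub1 ltac:(lia)).
  assert (IH2 := IH (Finite g) b Hsub2 ltac:(lia)).
  assert (Pt : (sumP (fun x => x = g) (mult M) ZM <= sumP (fun x => x = g) (mult Ft) ZF)%nat).
  { destruct (in_dec Req_EM_T g ZM) as [Hin|Hnin].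
    - destruct (HZMs g Hin) as [_ HMg].
      destruct (local_case al be k m M G Ft g HM HG HF Hmk HQ Hg HGg HMg HmM HmG HmF) as [HFg Hle].
      rewrite !sumP_point; auto. apply HZFs; auto.
    - rewrite sumP_notin; auto. lia. }
  rewrite (Sp (mult M) ZM), (Sp (mult Ft) ZF), Cg.
  rewrite !Nat.mul_add_distr_l. lia.
Qed.

Theorem theorem2p1 (k m : nat) (alpha beta : Rbar) (M G Ft : R -> R)
  (ZF ZG : list R) :
  (1 <= k)%nat -> (1 <= m)%nat -> (m <= k)%nat ->
  Rbar_lt alpha beta ->
  Ck_on k alpha beta M -> Ck_on k alpha beta G -> Ck_on k alpha beta Ft ->
  (forall h, in_open alpha beta h -> G h <> 0 ->
     Derive_n (fun x => M x / G x) m h = Ft h / G h ^ (m + 1)) ->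
  NoDup ZF -> (forall x, In x ZF <-> (in_open alpha beta x /\ Ft x = 0)) ->
  NoDup ZG -> (forall x, In x ZG <-> (in_open alpha beta x /\ G x = 0)) ->
  (forall x, in_open alpha beta x -> M x = 0 ->
     exists l, (l <= k)%nat /\ is_mult M x l) ->
  (forall x, in_open alpha beta x -> G x = 0 ->
     exists l, (l <= k)%nat /\ is_mult G x l) ->
  (forall x, in_open alpha beta x -> Ft x = 0 ->
     exists l, (l <= k)%nat /\ is_mult Ft x l) ->
  forall ZM : list R, NoDup ZM ->
    (forall x, In x ZM -> in_open alpha beta x /\ M x = 0) ->
    (sum_mult M ZM <= sum_mult Ft ZF + m * sum_mult G ZG + m)%nat.
Proof.
  intros Hk Hm1 Hmk Hab CM CG CF Hder HZF HZFs HZG HZGs HmM HmG HmF ZM HZM HZMs.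
  assert (HM := Ck_Cn k alpha beta M CM).
  assert (HG := Ck_Cn k alpha beta G CG).
  assert (HF := Ck_Cn k alpha beta Ft CF).
  assert (HQ : forall h, in_open alpha beta h -> G h <> 0 -> Ft h = Q M G m h).
  { intros h Hh HGh. specialize (Hder h Hh HGh).
    rewrite (Q_deriv alpha beta k M G HM HG m Hmk h Hh HGh) in Hder.
    rewrite Nat.add_1_r in Hder.
    assert (P : G h ^ S m <> 0) by (apply pow_nonzero; auto).
    apply (Rmult_eq_compat_r (G h ^ S m)) in Hder. unfold Rdiv in Hder.
    rewrite !Rmult_assoc, Rinv_l, !Rmult_1_r in Hder; auto. }
  assert (Main := main_ind alpha beta k m M G Ft ZF ZG ZM HM HG HF Hmk HQ HZF HZFs HZG HZGs
    HZM HZMs HmM HmG HmF _ alpha beta (fun x Hx => Hx) (le_n _)).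
  rewrite (sumP_all _ _ ZM) in Main by (intros; apply HZMs; auto).
  rewrite (sumP_all _ _ ZF) in Main by (intros; apply HZFs; auto).
  rewrite (sumP_all _ _ ZG) in Main by (intros; apply HZGs; auto).
  change (sum_mult M ZM) with (sumL (mult M) ZM).
  change (sum_mult Ft ZF) with (sumL (mult Ft) ZF).
  change (sum_mult G ZG) with (sumL (mult G) ZG).
  assert (Hc : (sumL (fun _ => 1%nat) ZG <= sumL (mult G) ZG)%nat).
  { apply sumL_le. intros x Hx. destruct (proj1 (HZGs x) Hx) as [Hx1 Hx2].
    destruct (HmG x Hx1 Hx2) as [l [_ Hl]]. rewrite (mult_eq _ _ _ Hl). apply Hl. }
  assert (m * sumL (fun _ => 1%nat) ZG <= m * sumL (mult G) ZG)%nat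
    by (apply Nat.mul_le_mono_l; auto).
  lia.
Qed.
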